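(* Fix a bounding strategy: degree bound $\phi$, explicit bound $k$, or node-weighted with cost $c$. Let $T$ be a non-degenerate FQST that is feasible for this strategy and that contains a pair of overlapping edges with common node $v$. Assume that either the strategy is the explicit bound or the node-weighted one, or the strategy is the degree bound and $v$ is not a Steiner point of degree exactly $\phi$. Then $T$ is not an MFQST for that strategy.
   Context: Let $Z=\{z_1,\dots,z_n\}\subset\mathbb{R}^2$ ($n\ge 1$) be a set of sources and $z_{BS}\in\mathbb{R}^2\setminus Z$ a sink; each source has supply $1$. A flow-dependent quadratic Steiner tree (FQST) consists of a finite set $S\subset\mathbb{R}^2$ of Steiner points and a tree $T$ with vertex set $Z\cup S\cup\{z_{BS}\}$ whose edges are directed towards $z_{BS}$. Every node other than the sink has exactly one out-edge, and the sink has none. Each edge $e$ carries a positive flow $f(e)$ such that: - at each source, the flow on its out-edge minus the total flow on its in-edges equals $1$; - at each Steiner point, the out-flow equals the total in-flow; - the sink receives total flow $n$. The cost is $L(T)=\sum_{e\in E(T)} f(e)|e|^2$. $T$ is degenerate if some edge has length $0$. Two edges are overlapping if they share a common endpoint and one of them, as a segment, is contained in the other. Bounding strategies and MFQSTs: - Degree bound: for a fixed integer $\phi\ge3$, every Steiner point has degree $\ge\phi$; an MFQST minimises $L$ among such FQSTs. - Explicit bound: for a fixed $k$, $|S|\le k$; an MFQST minimises $L$ among such FQSTs. - Node-weighted: for a fixed $c>0$, an MFQST minimises $L_c(T)=L(T)+c|S|$ over all FQSTs. *)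

(* Defs.v *)
From Stdlib Require Import Reals Lra List.
Open Scope R_scope.

Definition point := (R * R)%type.

Definition dist2 (p q : point) : R :=
  (fst p - fst q) ^ 2 + (snd p - snd q) ^ 2.

Definition on_seg (p a b : point) : Prop :=
  exists t : R, 0 <= t <= 1 /\
    p = (fst a + t * (fst b - fst a), snd a + t * (snd b - snd a)).

(** Vertex indices: [0 .. n-1] are the sources, [n .. n+m-1] the [m] Steiner
    points, and [n+m] is the sink.  Every non-sink vertex [i] has exactly one
    out-edge, namely [(i, par i)], carrying flow [flow i]. *)
Record FQSTdata := mkFQST {
  nsteiner : nat;
  spos : nat -> point;
  par : nat -> nat;
  flow : nat -> R
}.

Section Geometry.
Variables (n : nat) (Z : nat -> point) (zBS : point) (T : FQSTdata).

Definition sinkv : nat := (n + nsteiner T)%nat.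

Definition pos (i : nat) : point :=
  if Nat.ltb i n then Z i
  else if Nat.ltb i sinkv then spos T (i - n)
  else zBS.

Definition inflow (v : nat) : R :=
  fold_right Rplus 0
    (map (fun j => if Nat.eqb (par T j) v then flow T j else 0) (seq 0 sinkv)).

Definition indeg (v : nat) : nat :=
  length (filter (fun j => Nat.eqb (par T j) v) (seq 0 sinkv)).

Definition degree (v : nat) : nat :=
  (indeg v + (if Nat.ltb v sinkv then 1 else 0))%nat.

Definition is_steiner (v : nat) : Prop := (n <= v < sinkv)%nat.

Definition is_FQST : Prop :=
  (forall i, (i < sinkv)%nat -> (par T i <= sinkv)%nat) /\
  (* following out-edges always reaches the sink: T is a tree directed to zBS *)
  (forall i, (i < sinkv)%nat -> exists k, Nat.iter k (par T) i = sinkv) /\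
  (forall i, (i < sinkv)%nat -> 0 < flow T i) /\
  (forall i, (i < n)%nat -> flow T i - inflow i = 1) /\
  (forall i, is_steiner i -> flow T i = inflow i) /\
  inflow sinkv = INR n.

Definition cost : R :=
  fold_right Rplus 0
    (map (fun i => flow T i * dist2 (pos i) (pos (par T i))) (seq 0 sinkv)).

Definition degenerate : Prop :=
  exists i, (i < sinkv)%nat /\ pos i = pos (par T i).

Definition overlapping_at (v : nat) : Prop :=
  exists i j, (i < sinkv)%nat /\ (j < sinkv)%nat /\ i <> j /\
    (v = i \/ v = par T i) /\ (v = j \/ v = par T j) /\
    (forall p, on_seg p (pos i) (pos (par T i)) ->
               on_seg p (pos j) (pos (par T j))).

End Geometry.

Inductive strategy :=
| DegreeBound (phi : nat)
| ExplicitBound (k : nat)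
| NodeWeighted (c : R).

Definition feasible (st : strategy) (n : nat) (T : FQSTdata) : Prop :=
  match st with
  | DegreeBound phi => forall v, is_steiner n T v -> (phi <= degree n T v)%nat
  | ExplicitBound k => (nsteiner T <= k)%nat
  | NodeWeighted _ => True
  end.

Definition objective (st : strategy) (n : nat) (Z : nat -> point) (zBS : point)
  (T : FQSTdata) : R :=
  match st with
  | NodeWeighted c => cost n Z zBS T + c * INR (nsteiner T)
  | _ => cost n Z zBS T
  end.

Definition is_MFQST (st : strategy) (n : nat) (Z : nat -> point) (zBS : point)
  (T : FQSTdata) : Prop :=
  is_FQST n T /\ feasible st n T /\
  forall T', is_FQST n T' -> feasible st n T' ->
    objective st n Z zBS T <= objective st n Z zBS T'.

Definition strategy_ok (st : strategy) : Prop :=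
  match st with
  | DegreeBound phi => (3 <= phi)%nat
  | ExplicitBound _ => True
  | NodeWeighted c => 0 < c
  end.

(* Main.v *)
Require Import Defs.
From Stdlib Require Import Reals Lra Lia List Psatz Classical Arith Wf_nat.
Open Scope R_scope.

Ltac eqb_cases := repeat match goal with |- context [Nat.eqb ?a ?b] => destruct (Nat.eqb_spec a b) end.

Lemma rsum_ext (F G : nat -> R) l : (forall k, In k l -> F k = G k) ->
  fold_right Rplus 0 (map F l) = fold_right Rplus 0 (map G l).
Proof. induction l as [|a l IH]; intros H; simpl; [reflexivity|].
  rewrite H by (left; auto). rewrite IH by (intros; apply H; right; auto). reflexivity. Qed.

Lemma rsum_plus (F G : nat -> R) l :
  fold_right Rplus 0 (map (fun k => F k + G k) l) = fold_right Rplus 0 (map F l) + fold_right Rplus 0 (map G l).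
Proof. induction l; simpl; [ring|]. rewrite IHl. ring. Qed.

Lemma rsum_scal (F : nat -> R) c l :
  fold_right Rplus 0 (map (fun k => c * F k) l) = c * fold_right Rplus 0 (map F l).
Proof. induction l; simpl; [ring|]. rewrite IHl. ring. Qed.

Lemma rsum_delta0 a c l : ~ In a l ->
  fold_right Rplus 0 (map (fun k => if Nat.eqb k a then c else 0) l) = 0.
Proof. induction l as [|h l IH]; intros H; simpl; [reflexivity|].
  destruct (Nat.eqb_spec h a). { subst. exfalso; apply H; left; auto. }
  rewrite IH; [ring|]. intro; apply H; right; auto. Qed.

Lemma rsum_delta a c l : NoDup l -> In a l ->
  fold_right Rplus 0 (map (fun k => if Nat.eqb k a then c else 0) l) = c.
Proof. induction l as [|h l IH]; intros Hn H; simpl; [destruct H|].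
  inversion Hn; subst.
  destruct (Nat.eqb_spec h a).
  - subst. rewrite rsum_delta0 by auto. ring.
  - destruct H as [H|H]; [congruence|]. rewrite IH by auto. ring. Qed.

Lemma sum_diff2 (F G : nat -> R) l a b c1 c2 :
  (forall k, In k l -> F k = G k + (if Nat.eqb k a then c1 else 0) + (if Nat.eqb k b then c2 else 0)) ->
  NoDup l -> In a l -> In b l ->
  fold_right Rplus 0 (map F l) = fold_right Rplus 0 (map G l) + c1 + c2.
Proof. intros H Hn Ha Hb. rewrite (rsum_ext F _ l H). rewrite !rsum_plus.
  rewrite (rsum_delta a c1), (rsum_delta b c2) by auto. ring. Qed.

Lemma rsum_nonneg (F : nat -> R) l : (forall k, In k l -> 0 <= F k) -> 0 <= fold_right Rplus 0 (map F l).
Proof. induction l; intros H; simpl; [lra|].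
  assert (0 <= F a) by (apply H; left; auto).
  assert (0 <= fold_right Rplus 0 (map F l)) by (apply IHl; intros; apply H; right; auto). lra. Qed.

Lemma rsum_ge1 (F : nat -> R) l a : (forall k, In k l -> 0 <= F k) -> In a l -> F a <= fold_right Rplus 0 (map F l).
Proof. induction l as [|h l IH]; intros H Ha; simpl; [destruct Ha|].
  assert (0 <= F h) by (apply H; left; auto).
  destruct Ha as [Ha|Ha].
  - subst. assert (0 <= fold_right Rplus 0 (map F l)) by (apply rsum_nonneg; intros; apply H; right; auto). lra.
  - assert (F a <= fold_right Rplus 0 (map F l)) by (apply IH; auto; intros; apply H; right; auto). lra. Qed.

Lemma rsum_ge2 (F : nat -> R) l a b : (forall k, In k l -> 0 <= F k) -> NoDup l -> a <> b ->
  In a l -> In b l -> F a + F b <= fold_right Rplus 0 (map F l).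
Proof. induction l as [|h l IH]; intros H Hn Hab Ha Hb; simpl; [destruct Ha|].
  inversion Hn; subst.
  assert (0 <= F h) by (apply H; left; auto).
  assert (Hl : forall k, In k l -> 0 <= F k) by (intros; apply H; right; auto).
  destruct Ha as [Ha|Ha]; destruct Hb as [Hb|Hb].
  - congruence.
  - subst. pose proof (rsum_ge1 F l b Hl Hb). lra.
  - subst. pose proof (rsum_ge1 F l a Hl Ha). lra.
  - pose proof (IH Hl H3 Hab Ha Hb). lra. Qed.

Lemma sq_pos x : x <> 0 -> 0 < x^2.
Proof. intros H. destruct (Rlt_or_le x 0); [nra|]. assert (0 < x) by lra. nra. Qed.

Lemma dist2_pos a b : a <> b -> 0 < dist2 a b.
Proof. intros H. unfold dist2. destruct a as [a1 a2], b as [b1 b2]; simpl.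
  destruct (Req_dec a1 b1); destruct (Req_dec a2 b2).
  - subst. congruence.
  - assert (0 < (a2 - b2)^2) by (apply sq_pos; lra). nra.
  - assert (0 < (a1 - b1)^2) by (apply sq_pos; lra). nra.
  - assert (0 < (a2 - b2)^2) by (apply sq_pos; lra). nra. Qed.

Lemma sqn x : 0 <= x^2.
Proof. nra. Qed.

Lemma dist2_nonneg a b : 0 <= dist2 a b.
Proof. unfold dist2. assert (forall x:R, 0 <= x^2) by (intros; nra). pose proof (H (fst a - fst b)); pose proof (H (snd a - snd b)). lra. Qed.

Lemma seg_le1 p a b : on_seg p a b -> dist2 a p <= dist2 a b.
Proof. intros [t [Ht Hp]]. subst p. unfold dist2; simpl.
  destruct a as [a1 a2], b as [b1 b2]; simpl.
  replace ((a1 - (a1 + t * (b1 - a1))) ^ 2 + (a2 - (a2 + t * (b2 - a2))) ^ 2)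
   with (t^2 * ((a1 - b1) ^ 2 + (a2 - b2) ^ 2)) by ring.
  assert (0 <= (a1 - b1) ^ 2 + (a2 - b2) ^ 2) by (pose proof (sqn (a1-b1)); pose proof (sqn (a2-b2)); lra).
  assert (t^2 <= 1) by nra. nra. Qed.

Lemma seg_le2 p a b : on_seg p a b -> dist2 p b <= dist2 a b.
Proof. intros [t [Ht Hp]]. subst p. unfold dist2; simpl.
  destruct a as [a1 a2], b as [b1 b2]; simpl.
  replace ((a1 + t * (b1 - a1) - b1) ^ 2 + (a2 + t * (b2 - a2) - b2) ^ 2)
   with ((1-t)^2 * ((a1 - b1) ^ 2 + (a2 - b2) ^ 2)) by ring.
  assert (0 <= (a1 - b1) ^ 2 + (a2 - b2) ^ 2) by (pose proof (sqn (a1-b1)); pose proof (sqn (a2-b2)); lra).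
  assert ((1-t)^2 <= 1) by nra. nra. Qed.

Lemma seg_strict p a b : on_seg p a b -> p <> a -> p <> b -> dist2 a p + dist2 p b < dist2 a b.
Proof. intros [t [Ht Hp]] Ha Hb.
  assert (Hab : a <> b).
  { intro E; subst b. apply Ha. rewrite Hp. destruct a; simpl. f_equal; ring. }
  pose proof (dist2_pos a b Hab) as HD.
  assert (t <> 0). { intro E; subst t. apply Ha. rewrite Hp. destruct a; simpl. f_equal; ring. }
  assert (t <> 1). { intro E; subst t. apply Hb. rewrite Hp. destruct a, b; simpl. f_equal; ring. }
  subst p. unfold dist2 in *; destruct a as [a1 a2], b as [b1 b2]; simpl in *.
  replace ((a1 - (a1 + t * (b1 - a1))) ^ 2 + (a2 - (a2 + t * (b2 - a2))) ^ 2 +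
   ((a1 + t * (b1 - a1) - b1) ^ 2 + (a2 + t * (b2 - a2) - b2) ^ 2))
  with ((a1 - b1) ^ 2 + (a2 - b2) ^ 2 - 2 * (t * (1 - t)) * ((a1 - b1) ^ 2 + (a2 - b2) ^ 2)) by ring.
  assert (0 < t * (1 - t)) by (apply Rmult_lt_0_compat; lra). nra. Qed.

Lemma on_seg0 a b : on_seg a a b.
Proof. exists 0. split; [lra|]. destruct a; simpl; f_equal; ring. Qed.
Lemma on_seg1 a b : on_seg b a b.
Proof. exists 1. split; [lra|]. destruct a, b; simpl; f_equal; ring. Qed.

Definition reroute (T : FQSTdata) (x z w : nat) (d : R) : FQSTdata :=
  mkFQST (nsteiner T) (spos T) (fun k => if Nat.eqb k x then z else par T k)
    (fun k => if Nat.eqb k w then flow T k + d else flow T k).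

Lemma inflow_reroute n T x z w d k : x <> w -> (x < sinkv n T)%nat -> (w < sinkv n T)%nat ->
  inflow n (reroute T x z w d) k = inflow n T k
    + ((if Nat.eqb z k then flow T x else 0) - (if Nat.eqb (par T x) k then flow T x else 0))
    + (if Nat.eqb (par T w) k then d else 0).
Proof.
  intros Hxw Hx Hw. unfold inflow. change (sinkv n (reroute T x z w d)) with (sinkv n T).
  apply (sum_diff2 _ _ _ x w); [| apply seq_NoDup | apply in_seq; lia | apply in_seq; lia].
  intros j _. simpl. eqb_cases; subst; try congruence; try lia; try ring.
Qed.

Lemma cost_reroute n Z zBS T x z w d : x <> w -> (x < sinkv n T)%nat -> (w < sinkv n T)%nat ->
  cost n Z zBS (reroute T x z w d) = cost n Z zBS T
    + flow T x * (dist2 (Defs.pos n Z zBS T x) (Defs.pos n Z zBS T z) - dist2 (Defs.pos n Z zBS T x) (Defs.pos n Z zBS T (par T x)))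
    + d * dist2 (Defs.pos n Z zBS T w) (Defs.pos n Z zBS T (par T w)).
Proof.
  intros Hxw Hx Hw. unfold cost. change (sinkv n (reroute T x z w d)) with (sinkv n T).
  assert (Hp : forall k, Defs.pos n Z zBS (reroute T x z w d) k = Defs.pos n Z zBS T k) by reflexivity.
  apply (sum_diff2 _ _ _ x w); [| apply seq_NoDup | apply in_seq; lia | apply in_seq; lia].
  intros j _. rewrite !Hp. simpl. eqb_cases; subst; try congruence; try lia; try ring.
Qed.

Lemma iter_back (p : nat -> nat) s k : (exists m, Nat.iter m p (p k) = s) -> exists m, Nat.iter m p k = s.
Proof. intros [m Hm]. exists (S m). rewrite Nat.iter_succ_r. exact Hm. Qed.

Lemma reach_A (p : nat -> nat) s x : p x <> s ->
  forall m k, Nat.iter m p k = s ->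
  exists m', Nat.iter m' (fun k => if Nat.eqb k x then p (p x) else p k) k = s.
Proof.
  intros Hpx m. induction m as [m IH] using lt_wf_ind. intros k Hk.
  set (p' := fun k => if Nat.eqb k x then p (p x) else p k).
  destruct (Nat.eq_dec k s) as [E|E]. { exists 0%nat. exact E. }
  destruct m as [|m0]. { simpl in Hk. congruence. }
  rewrite Nat.iter_succ_r in Hk.
  apply iter_back.
  destruct (Nat.eqb_spec k x) as [Ek|Ek].
  - assert (Hpk : p' k = p (p x)) by (unfold p'; rewrite Ek, Nat.eqb_refl; reflexivity).
    rewrite Hpk. subst k. destruct m0 as [|m1]. { simpl in Hk. congruence. }
    rewrite Nat.iter_succ_r in Hk. apply (IH m1); [lia | exact Hk].
  - assert (Hpk : p' k = p k) by (unfold p'; destruct (Nat.eqb_spec k x); [congruence|reflexivity]).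
    rewrite Hpk. apply (IH m0); [lia | exact Hk].
Qed.

Lemma reach_B (p : nat -> nat) s x z : z <> x -> p z = p x ->
  forall m k, Nat.iter m p k = s ->
  exists m', Nat.iter m' (fun k => if Nat.eqb k x then z else p k) k = s.
Proof.
  intros Hzx Hpz m. induction m as [m IH] using lt_wf_ind. intros k Hk.
  set (p' := fun k => if Nat.eqb k x then z else p k).
  destruct (Nat.eq_dec k s) as [E|E]. { exists 0%nat. exact E. }
  destruct m as [|m0]. { simpl in Hk. congruence. }
  rewrite Nat.iter_succ_r in Hk.
  apply iter_back.
  destruct (Nat.eqb_spec k x) as [Ek|Ek].
  - assert (Hpk : p' k = z) by (unfold p'; rewrite Ek, Nat.eqb_refl; reflexivity).
    rewrite Hpk. apply iter_back.
    assert (Hpz' : p' z = p x) by (unfold p'; destruct (Nat.eqb_spec z x); [congruence|]; exact Hpz).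
    rewrite Hpz'. apply (IH m0); [lia | rewrite <- Ek; exact Hk].
  - assert (Hpk : p' k = p k) by (unfold p'; destruct (Nat.eqb_spec k x); [congruence|reflexivity]).
    rewrite Hpk. apply (IH m0); [lia | exact Hk].
Qed.

Lemma reroute_FQST n T x z w d :
  is_FQST n T -> (x < sinkv n T)%nat -> (w < sinkv n T)%nat -> x <> w ->
  (z <= sinkv n T)%nat -> 0 < flow T w + d ->
  (forall k, (if Nat.eqb z k then flow T x else 0) - (if Nat.eqb (par T x) k then flow T x else 0)
      + (if Nat.eqb (par T w) k then d else 0) = (if Nat.eqb k w then d else 0)) ->
  (forall k, (k < sinkv n T)%nat -> exists m, Nat.iter m (par (reroute T x z w d)) k = sinkv n T) ->
  is_FQST n (reroute T x z w d).
Proof.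
  intros [H1 [H2 [H3 [H4 [H5 H6]]]]] Hx Hw Hxw Hz Hpos Bal Hreach.
  assert (Hfl : forall i, flow (reroute T x z w d) i = flow T i + (if Nat.eqb i w then d else 0)).
  { intros i. simpl. destruct (Nat.eqb i w); ring. }
  unfold is_FQST. change (sinkv n (reroute T x z w d)) with (sinkv n T).
  repeat split.
  - intros i Hi. simpl. destruct (Nat.eqb i x); [lia | apply H1; auto].
  - exact Hreach.
  - intros i Hi. rewrite Hfl. destruct (Nat.eqb_spec i w); [subst; lra|]. specialize (H3 i Hi). lra.
  - intros i Hi. rewrite Hfl, inflow_reroute by auto. specialize (H4 i Hi). specialize (Bal i). lra.
  - intros i Hi. rewrite Hfl, inflow_reroute by auto. specialize (H5 i Hi). specialize (Bal i). lra.
  - rewrite inflow_reroute by auto. specialize (Bal (sinkv n T)).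
    destruct (Nat.eqb_spec (sinkv n T) w); [lia|]. lra.
Qed.

Lemma filter_le (p q : nat -> bool) l : (forall j, In j l -> p j = true -> q j = true) ->
  (length (filter p l) <= length (filter q l))%nat.
Proof. induction l as [|a l IH]; intros H; simpl; [lia|].
  assert (IH' : (length (filter p l) <= length (filter q l))%nat) by (apply IH; intros; apply H; auto; right; auto).
  destruct (p a) eqn:E.
  - rewrite (H a (or_introl eq_refl) E). simpl. lia.
  - destruct (q a); simpl; lia. Qed.

Lemma filter_S (p q : nat -> bool) l x : NoDup l -> In x l -> p x = true -> q x = false ->
  (forall j, In j l -> j <> x -> p j = q j) ->
  length (filter p l) = S (length (filter q l)).
Proof. induction l as [|a l IH]; intros Hn Hx Hp Hq H; [destruct Hx|].
  inversion Hn; subst. simpl.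
  destruct Hx as [Hx|Hx].
  - subst a. rewrite Hp, Hq. simpl. f_equal. f_equal. apply filter_ext_in.
    intros j Hj. apply H; [right; auto|]. intro; subst; contradiction.
  - assert (a <> x) by (intro; subst; contradiction).
    rewrite (H a (or_introl eq_refl) H0).
    destruct (q a); simpl; [f_equal|]; apply IH; auto; intros; apply H; auto; right; auto.
Qed.

Lemma reroute_feasible st n T x z w d v :
  feasible st n T -> par T x = v -> z <> v -> (x < sinkv n T)%nat ->
  (forall phi, st = DegreeBound phi -> ~ (is_steiner n T v /\ degree n T v = phi)) ->
  feasible st n (reroute T x z w d).
Proof.
  intros Hf Hxv Hzv Hx Hd. destruct st as [phi|k|c]; simpl in *; auto.
  intros u Hu. specialize (Hf u Hu). specialize (Hd phi eq_refl).
  unfold degree, indeg in *. change (sinkv n (reroute T x z w d)) with (sinkv n T) in *.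
  cbn [par reroute].
  destruct (Nat.eq_dec u v) as [E|E].
  - subst u.
    assert (Hs : length (filter (fun j => Nat.eqb (par T j) v) (seq 0 (sinkv n T)))
       = S (length (filter (fun j => Nat.eqb (if Nat.eqb j x then z else par T j) v) (seq 0 (sinkv n T))))).
    { apply (filter_S _ _ _ x); [apply seq_NoDup | apply in_seq; lia | | |].
      - rewrite Hxv. apply Nat.eqb_refl.
      - rewrite Nat.eqb_refl. apply Nat.eqb_neq; auto.
      - intros j _ Hj. apply Nat.eqb_neq in Hj. rewrite Hj. reflexivity. }
    assert (degree n T v <> phi) by (intro; apply Hd; split; auto).
    unfold degree, indeg in H. lia.
  - pose proof (filter_le (fun j => Nat.eqb (par T j) u) (fun j => Nat.eqb (if Nat.eqb j x then z else par T j) u)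
      (seq 0 (sinkv n T))) as HL.
    assert (HL' : (length (filter (fun j => Nat.eqb (par T j) u) (seq 0 (sinkv n T))) <=
      length (filter (fun j => Nat.eqb (if Nat.eqb j x then z else par T j) u) (seq 0 (sinkv n T))))%nat).
    { apply HL. intros j _ Hj. destruct (Nat.eqb_spec j x); [|exact Hj].
      subst. apply Nat.eqb_eq in Hj. congruence. }
    lia.
Qed.

Definition moveS (T : FQSTdata) (m : nat) (X : point) : FQSTdata :=
  mkFQST (nsteiner T) (fun q => if Nat.eqb q m then X else spos T q) (par T) (flow T).

Lemma pos_move n Z zBS T s X k : is_steiner n T s ->
  Defs.pos n Z zBS (moveS T (s - n) X) k = if Nat.eqb k s then X else Defs.pos n Z zBS T k.
Proof. intros [H1 H2]. unfold Defs.pos. change (sinkv n (moveS T (s-n) X)) with (sinkv n T). cbn [spos moveS].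
  destruct (Nat.ltb_spec k n); destruct (Nat.ltb_spec k (sinkv n T)); destruct (Nat.eqb_spec k s);
  destruct (Nat.eqb_spec (k - n) (s - n)); try lia; auto. Qed.

Lemma par_neq n T i : is_FQST n T -> (i < sinkv n T)%nat -> par T i <> i.
Proof. intros [_ [H2 _]] Hi E. destruct (H2 i Hi) as [k Hk].
  assert (forall m, Nat.iter m (par T) i = i). { induction m; simpl; auto. rewrite IHm; auto. }
  rewrite H in Hk. lia. Qed.

Lemma contra st n Z zBS T T' :
  (forall T', is_FQST n T' -> feasible st n T' -> objective st n Z zBS T <= objective st n Z zBS T') ->
  is_FQST n T' -> feasible st n T' -> nsteiner T' = nsteiner T -> cost n Z zBS T' < cost n Z zBS T -> False.
Proof. intros H HF Hf Hs Hc. specialize (H T' HF Hf). destruct st; simpl in H; try lra.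
  rewrite Hs in H. lra. Qed.

Lemma inflow_ge n T x y : is_FQST n T -> (x < sinkv n T)%nat -> par T x = y ->
  flow T x <= inflow n T y.
Proof. intros HF Hx Hy. destruct HF as [_ [_ [H3 _]]]. unfold inflow.
  pose proof (rsum_ge1 (fun j => if Nat.eqb (par T j) y then flow T j else 0) (seq 0 (sinkv n T)) x) as G.
  simpl in G. rewrite Hy, Nat.eqb_refl in G. apply G; [|apply in_seq; lia].
  intros k Hk. apply in_seq in Hk. destruct (Nat.eqb (par T k) y); [|lra]. left; apply H3; lia. Qed.

Lemma only_inedge n T x y k : is_FQST n T -> (x < sinkv n T)%nat -> par T x = y ->
  inflow n T y = flow T x -> (k < sinkv n T)%nat -> k <> x -> par T k <> y.
Proof. intros HF Hx Hy Hin Hk Hkx E. pose proof HF as [_ [_ [H3 _]]]. unfold inflow in Hin.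
  pose proof (rsum_ge2 (fun j => if Nat.eqb (par T j) y then flow T j else 0) (seq 0 (sinkv n T)) x k) as G.
  simpl in G. rewrite Hy, E, Nat.eqb_refl in G.
  assert (flow T x + flow T k <= fold_right Rplus 0
    (map (fun j : nat => if par T j =? y then flow T j else 0) (seq 0 (sinkv n T)))).
  { apply G; [| apply seq_NoDup | auto | apply in_seq; lia | apply in_seq; lia].
    intros j Hj. apply in_seq in Hj. destruct (Nat.eqb (par T j) y); [|lra]. left; apply H3; lia. }
  specialize (H3 k Hk). lra. Qed.

Lemma cost_move1 n Z zBS T x y W : is_FQST n T -> is_steiner n T y -> (x < sinkv n T)%nat -> par T x = y ->
  (forall k, (k < sinkv n T)%nat -> k <> x -> par T k <> y) ->
  cost n Z zBS (moveS T (y - n) W) = cost n Z zBS T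
    + flow T x * (dist2 (Defs.pos n Z zBS T x) W - dist2 (Defs.pos n Z zBS T x) (Defs.pos n Z zBS T y))
    + flow T y * (dist2 W (Defs.pos n Z zBS T (par T y)) - dist2 (Defs.pos n Z zBS T y) (Defs.pos n Z zBS T (par T y))).
Proof. intros HF Hy Hx Hxy Honly. pose proof Hy as [Hy1 Hy2].
  assert (Hpy : par T y <> y) by (apply (par_neq n T); auto).
  assert (Hxy' : x <> y) by (intro E; rewrite <- E in Hxy; apply (par_neq n T x); auto).
  unfold cost. change (sinkv n (moveS T (y - n) W)) with (sinkv n T).
  apply (sum_diff2 _ _ _ x y); [| apply seq_NoDup | apply in_seq; lia | apply in_seq; lia].
  intros k Hk. apply in_seq in Hk. rewrite !pos_move by auto. cbn [par flow moveS].
  destruct (Nat.eqb_spec k x) as [e1|e1]; destruct (Nat.eqb_spec k y) as [e2|e2]; try congruence.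
  - rewrite e1, Hxy, Nat.eqb_refl. destruct (Nat.eqb_spec x y); [congruence|]. ring.
  - rewrite e2. destruct (Nat.eqb_spec (par T y) y); [congruence|]. ring.
  - destruct (Nat.eqb_spec (par T k) y). { exfalso; apply (Honly k); auto; lia. } ring.
Qed.

Lemma rsum_quad (G a b : nat -> R) t l :
  fold_right Rplus 0 (map (fun k => G k + t * a k + t^2 * b k) l)
  = fold_right Rplus 0 (map G l) + t * fold_right Rplus 0 (map a l) + t^2 * fold_right Rplus 0 (map b l).
Proof. induction l; cbn [map fold_right]; [ring|]. rewrite IHl. ring. Qed.

Definition ek (T : FQSTdata) s k : R := (if Nat.eqb k s then 1 else 0) - (if Nat.eqb (par T k) s then 1 else 0).

Definition qA n Z zBS T s (u : point) : R :=
  fold_right Rplus 0 (map (fun k => flow T k * (2 * ek T s k *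
    ((fst (Defs.pos n Z zBS T k) - fst (Defs.pos n Z zBS T (par T k))) * fst u +
     (snd (Defs.pos n Z zBS T k) - snd (Defs.pos n Z zBS T (par T k))) * snd u))) (seq 0 (sinkv n T))).
Definition qB n T s (u : point) : R :=
  fold_right Rplus 0 (map (fun k => flow T k * (ek T s k ^ 2 * (fst u ^ 2 + snd u ^ 2))) (seq 0 (sinkv n T))).

Lemma cost_move_quad n Z zBS T s u t : is_steiner n T s ->
  cost n Z zBS (moveS T (s - n) (fst (Defs.pos n Z zBS T s) + t * fst u, snd (Defs.pos n Z zBS T s) + t * snd u))
  = cost n Z zBS T + t * qA n Z zBS T s u + t^2 * qB n T s u.
Proof. intros Hs. unfold cost, qA, qB. change (sinkv n (moveS T (s - n) ?X)) with (sinkv n T).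
  rewrite <- rsum_quad. apply rsum_ext. intros k _. rewrite !pos_move by auto. cbn [par flow moveS].
  unfold ek. destruct (Nat.eqb_spec k s) as [e1|e1]; destruct (Nat.eqb_spec (par T k) s) as [e2|e2].
  - rewrite e2, e1. unfold dist2; simpl; ring.
  - rewrite e1. unfold dist2; simpl; ring.
  - rewrite e2. unfold dist2; simpl; ring.
  - unfold dist2; simpl; ring.
Qed.

Lemma qB_nonneg n T s u : is_FQST n T -> 0 <= qB n T s u.
Proof. intros [_ [_ [H3 _]]]. unfold qB. apply rsum_nonneg. intros k Hk. apply in_seq in Hk.
  pose proof (H3 k ltac:(lia)). pose proof (sqn (ek T s k)). pose proof (sqn (fst u)). pose proof (sqn (snd u)).
  apply Rmult_le_pos; [lra|]. apply Rmult_le_pos; lra. Qed.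

Lemma quad_zero A B : (forall t, 0 <= t * A + t^2 * B) -> 0 <= B -> A = 0.
Proof. intros H HB. destruct (Req_dec A 0) as [|HA]; auto. exfalso.
  set (t := - A / (2 * (B + 1))). specialize (H t).
  assert (E : t * A + t^2 * B = - A^2 * (B + 2) / (4 * (B+1)^2)) by (unfold t; field; lra).
  rewrite E in H. pose proof (sq_pos A HA). pose proof (sq_pos (B+1) ltac:(lra)).
  assert (0 < A^2 * (B + 2) / (4 * (B+1)^2)).
  { apply Rdiv_lt_0_compat; [apply Rmult_lt_0_compat; lra | lra]. }
  lra. Qed.

Lemma caseA st n Z zBS T x v :
  (forall T', is_FQST n T' -> feasible st n T' -> objective st n Z zBS T <= objective st n Z zBS T') ->
  is_FQST n T -> feasible st n T ->
  (x < sinkv n T)%nat -> par T x = v -> (v < sinkv n T)%nat ->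
  (forall phi, st = DegreeBound phi -> ~ (is_steiner n T v /\ degree n T v = phi)) ->
  dist2 (Defs.pos n Z zBS T x) (Defs.pos n Z zBS T (par T v)) - dist2 (Defs.pos n Z zBS T x) (Defs.pos n Z zBS T v)
   - dist2 (Defs.pos n Z zBS T v) (Defs.pos n Z zBS T (par T v)) < 0 -> False.
Proof.
  intros Hopt HF Hf Hx Hxv Hv Hd HE.
  pose proof HF as HF'. destruct HF' as [H1 [H2 [H3 [H4 [H5 H6]]]]].
  assert (Hnx : x <> v) by (intro E; rewrite E in Hxv; apply (par_neq n T v); auto).
  assert (Hzv : par T v <> v) by (apply (par_neq n T); auto).
  pose proof (inflow_ge n T x v HF Hx Hxv) as Hin.
  pose proof (H3 x Hx) as Hfx.
  assert (Hcase : flow T x < flow T v \/ (is_steiner n T v /\ inflow n T v = flow T x)).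
  { destruct (Nat.ltb_spec v n) as [Hvn|Hvn].
    - left. specialize (H4 v Hvn). lra.
    - assert (Hs : is_steiner n T v) by (split; lia). specialize (H5 v Hs).
      destruct (Rle_lt_or_eq_dec _ _ Hin); [left; lra | right; split; auto]. }
  destruct Hcase as [Hlt | [Hs Heq]].
  - apply (contra st n Z zBS T (reroute T x (par T v) v (- flow T x)) Hopt).
    + apply reroute_FQST; auto.
      * lra.
      * intros k. rewrite Hxv. eqb_cases; try congruence; lra.
      * intros k Hk. destruct (H2 k Hk) as [m Hm].
        assert (Hps : par T x <> sinkv n T) by lia.
        pose proof (reach_A (par T) (sinkv n T) x Hps m k Hm) as R. rewrite Hxv in R. exact R.
    + apply (reroute_feasible st n T x (par T v) v (- flow T x) v); auto.
    + reflexivity.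
    + rewrite cost_reroute by auto. rewrite Hxv. nra.
  - pose proof (H5 v Hs) as Hfv.
    apply (contra st n Z zBS T (moveS T (v - n) (Defs.pos n Z zBS T x)) Hopt); [exact HF | exact Hf | reflexivity |].
    rewrite (cost_move1 n Z zBS T x v) by (auto; intros k Hk Hkx; apply (only_inedge n T x v k); auto).
    assert (E0 : dist2 (Defs.pos n Z zBS T x) (Defs.pos n Z zBS T x) = 0) by (unfold dist2; ring).
    rewrite E0. rewrite Hfv, Heq. nra.
Qed.

Lemma rerouteB_props st n Z zBS T x z v :
  is_FQST n T -> feasible st n T ->
  (x < sinkv n T)%nat -> (z < sinkv n T)%nat -> x <> z -> par T x = v -> par T z = v ->
  (forall phi, st = DegreeBound phi -> ~ (is_steiner n T v /\ degree n T v = phi)) ->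
  is_FQST n (reroute T x z z (flow T x)) /\ feasible st n (reroute T x z z (flow T x)) /\
  cost n Z zBS (reroute T x z z (flow T x)) = cost n Z zBS T
    + flow T x * (dist2 (Defs.pos n Z zBS T x) (Defs.pos n Z zBS T z) - dist2 (Defs.pos n Z zBS T x) (Defs.pos n Z zBS T v))
    + flow T x * dist2 (Defs.pos n Z zBS T z) (Defs.pos n Z zBS T v).
Proof.
  intros HF Hf Hx Hz Hxz Hxv Hzv Hd.
  pose proof HF as HF'. destruct HF' as [H1 [H2 [H3 [H4 [H5 H6]]]]].
  assert (Hzv' : z <> v) by (intro E; rewrite E in Hzv; apply (par_neq n T v); auto; rewrite <- E; auto).
  split; [|split].
  - apply reroute_FQST; auto.
    + lia.
    + pose proof (H3 x Hx); pose proof (H3 z Hz); lra.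
    + intros k. rewrite Hxv, Hzv. eqb_cases; try congruence; lra.
    + intros k Hk. destruct (H2 k Hk) as [m Hm].
      exact (reach_B (par T) (sinkv n T) x z (not_eq_sym Hxz) (eq_trans Hzv (eq_sym Hxv)) m k Hm).
  - apply (reroute_feasible st n T x z z (flow T x) v); auto.
  - rewrite cost_reroute by auto. rewrite Hxv, Hzv. ring.
Qed.

Lemma caseDeg st n Z zBS T o s v :
  (forall T', is_FQST n T' -> feasible st n T' -> objective st n Z zBS T <= objective st n Z zBS T') ->
  is_FQST n T -> feasible st n T -> is_steiner n T s -> (o < sinkv n T)%nat -> o <> s ->
  par T o = v -> par T s = v -> Defs.pos n Z zBS T o = Defs.pos n Z zBS T s ->
  Defs.pos n Z zBS T o <> Defs.pos n Z zBS T v ->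
  (forall phi, st = DegreeBound phi -> ~ (is_steiner n T v /\ degree n T v = phi)) -> False.
Proof.
  intros Hopt HF Hf Hs Ho Hos Hov Hsv Hpos Hdeg Hd.
  pose proof Hs as [Hs1 Hs2].
  assert (Hvs : v <> s) by (intro E; rewrite E in Hsv; apply (par_neq n T s); auto; lia).
  assert (Hvo : o <> v) by (intro E; rewrite E in Hdeg; congruence).
  set (P := Defs.pos n Z zBS T s) in *.
  set (u := (fst (Defs.pos n Z zBS T v) - fst P, snd (Defs.pos n Z zBS T v) - snd P)).
  assert (HA : qA n Z zBS T s u = 0).
  { apply (quad_zero _ (qB n T s u)); [intros t | apply qB_nonneg; auto].
    pose proof (Hopt (moveS T (s - n) (fst P + t * fst u, snd P + t * snd u)) HF Hf) as H.
    assert (Hc : cost n Z zBS T <= cost n Z zBS (moveS T (s - n) (fst P + t * fst u, snd P + t * snd u))).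
    { destruct st; unfold objective in H; try exact H. change (nsteiner (moveS T (s - n) (fst P + t * fst u, snd P + t * snd u))) with (nsteiner T) in H. lra. }
    unfold P in Hc. rewrite cost_move_quad in Hc by auto. lra. }
  pose proof (dist2_pos _ _ Hdeg) as HD.
  pose proof HF as [_ [_ [H3 _]]].
  set (B := qB n T s u).
  assert (HB : 0 <= B) by (apply qB_nonneg; auto).
  set (D := dist2 (Defs.pos n Z zBS T o) (Defs.pos n Z zBS T v)).
  set (f := flow T o).
  assert (Hf0 : 0 < f) by (apply H3; auto).
  set (K := f * D).
  assert (HK : 0 < K) by (apply Rmult_lt_0_compat; auto).
  set (t := K / (B + 2 * K)).
  assert (Ht : t * (B + 2 * K) = K) by (unfold t; field; lra).
  assert (Ht0 : 0 < t) by (unfold t; apply Rdiv_lt_0_compat; lra).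
  assert (Hneg : t^2 * B + K * (2 * t^2 - 2 * t) < 0).
  { replace (t^2 * B + K * (2 * t^2 - 2 * t)) with (t * (t * (B + 2 * K)) - 2 * K * t) by ring.
    rewrite Ht. assert (0 < t * K) by (apply Rmult_lt_0_compat; auto). lra. }
  set (Tm := moveS T (s - n) (fst P + t * fst u, snd P + t * snd u)).
  destruct (rerouteB_props st n Z zBS Tm o s v HF Hf Ho Hs2 Hos Hov Hsv Hd) as [HF2 [Hf2 Hc2]].
  apply (contra st n Z zBS T _ Hopt HF2 Hf2 eq_refl).
  rewrite Hc2. unfold Tm. rewrite !pos_move by auto.
  destruct (Nat.eqb_spec o s); [congruence|]. destruct (Nat.eqb_spec v s); [congruence|]. rewrite Nat.eqb_refl.
  unfold P. rewrite cost_move_quad by auto. fold P. fold B. rewrite HA.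
  replace (flow (moveS T (s - n) (fst P + t * fst u, snd P + t * snd u)) o) with f by reflexivity.
  assert (E1 : dist2 (Defs.pos n Z zBS T o) (fst P + t * fst u, snd P + t * snd u) = t^2 * D).
  { unfold D, u. rewrite Hpos. fold P. unfold dist2; simpl. ring. }
  assert (E2 : dist2 (fst P + t * fst u, snd P + t * snd u) (Defs.pos n Z zBS T v) = (1 - t)^2 * D).
  { unfold D, u. rewrite Hpos. fold P. unfold dist2; simpl. ring. }
  rewrite E1, E2. fold D.
  assert (f * (t ^ 2 * D - D) + f * ((1 - t) ^ 2 * D) = K * (2 * t^2 - 2 * t)) by (unfold K; ring).
  lra.
Qed.

Lemma pos_src n Z zBS T i : (i < n)%nat -> Defs.pos n Z zBS T i = Z i.
Proof. intros H. unfold Defs.pos. destruct (Nat.ltb_spec i n); [reflexivity | lia]. Qed.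

Theorem mainTheorem5 (st : strategy) (n : nat) (Z : nat -> point) (zBS : point)
  (T : FQSTdata) (v : nat) :
  strategy_ok st ->
  (1 <= n)%nat ->
  (forall i j, (i < n)%nat -> (j < n)%nat -> Z i = Z j -> i = j) ->
  (forall i, (i < n)%nat -> Z i <> zBS) ->
  is_FQST n T ->
  ~ degenerate n Z zBS T ->
  feasible st n T ->
  overlapping_at n Z zBS T v ->
  (forall phi, st = DegreeBound phi ->
     ~ (is_steiner n T v /\ degree n T v = phi)) ->
  ~ is_MFQST st n Z zBS T.
Proof.
  intros Hst Hn Zinj Zsink HF Hnd Hfeas Hov Hdeg [_ [_ Hopt]].
  assert (ND : forall k, (k < sinkv n T)%nat -> Defs.pos n Z zBS T k <> Defs.pos n Z zBS T (par T k)).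
  { intros k Hk E. apply Hnd. exists k. auto. }
  destruct Hov as (i & j & Hi & Hj & Hij & Hvi & Hvj & Hseg).
  destruct Hvi as [Ei|Ei]; destruct Hvj as [Ej|Ej].
  - congruence.
  - subst i.
    apply (caseA st n Z zBS T j v Hopt HF Hfeas Hj (eq_sym Ej) Hi Hdeg).
    pose proof (Hseg _ (on_seg1 _ _)) as S. rewrite <- Ej in S.
    pose proof (seg_le1 _ _ _ S). pose proof (dist2_pos _ _ (ND v Hi)). lra.
  - subst j.
    apply (caseA st n Z zBS T i v Hopt HF Hfeas Hi (eq_sym Ei) Hj Hdeg).
    pose proof (Hseg _ (on_seg0 _ _)) as S.
    pose proof (seg_le2 _ _ _ S). pose proof (ND i Hi) as Ni. rewrite <- Ei in Ni.
    pose proof (dist2_pos _ _ Ni). lra.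
  - pose proof (Hseg _ (on_seg0 _ _)) as S. rewrite <- Ej in S.
    pose proof (ND i Hi) as Ni. rewrite <- Ei in Ni.
    pose proof (ND j Hj) as Nj. rewrite <- Ej in Nj.
    destruct (classic (Defs.pos n Z zBS T i = Defs.pos n Z zBS T j)) as [Eq|Neq].
    + destruct (Nat.ltb_spec i n) as [Hin|Hin].
      * destruct (Nat.ltb_spec j n) as [Hjn|Hjn].
        { rewrite !pos_src in Eq by auto. apply Hij. apply Zinj; auto. }
        apply (caseDeg st n Z zBS T i j v Hopt HF Hfeas); auto.
        split; lia.
      * apply (caseDeg st n Z zBS T j i v Hopt HF Hfeas); auto.
        split; lia.
    + destruct (rerouteB_props st n Z zBS T j i v HF Hfeas Hj Hi (not_eq_sym Hij) (eq_sym Ej) (eq_sym Ei) Hdeg)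
        as [HF2 [Hf2 Hc2]].
      apply (contra st n Z zBS T _ Hopt HF2 Hf2 eq_refl).
      rewrite Hc2.
      pose proof (seg_strict _ _ _ S Neq Ni).
      pose proof HF as [_ [_ [H3 _]]]. pose proof (H3 j Hj). nra.
Qed.
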